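(* Let $(M_1,f_1,g_1)$ and $(M_2,f_2,g_2)$ be $(m,n)$-hypermodules over a commutative Krasner $(m,n)$-hyperring $(R,f',g')$ with scalar identity $1$, let $h:M_1\to M_2$ be an epimorphism, and let $\phi_1:\mathcal{SH}(M_1)\to\mathcal{SH}(M_1)\cup\{\varnothing\}$ and $\phi_2:\mathcal{SH}(M_2)\to\mathcal{SH}(M_2)\cup\{\varnothing\}$ be functions. Then: (1) if $Q_2$ is an $n$-ary $\phi_2$-classical prime subhypermodule of $M_2$ with $\phi_1(h^{-1}(Q_2))=h^{-1}(\phi_2(Q_2))$, then $h^{-1}(Q_2)$ is an $n$-ary $\phi_1$-classical prime subhypermodule of $M_1$; (2) if $Q_1$ is an $n$-ary $\phi_1$-classical prime subhypermodule of $M_1$ with $\mathrm{Ker}(h)\subseteq Q_1$ and $\phi_2(h(Q_1))=h(\phi_1(Q_1))$, then $h(Q_1)$ is an $n$-ary $\phi_2$-classical prime subhypermodule of $M_2$.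
   Context: A commutative Krasner $(m,n)$-hyperring with scalar identity $1$ is a triple $(R,f',g')$ where $(R,f')$ is a canonical $m$-ary hypergroup with zero $0$, $(R,g')$ is a commutative $n$-ary semigroup, $g'$ is distributive over $f'$, $0$ is a zero element for $g'$, and $g'(x,1^{(n-1)})=x$. Notation: $x_i^j$ denotes $x_i,\dots,x_j$ and $x^{(k)}$ denotes $x$ repeated $k$ times. An $(m,n)$-hypermodule over $R$ is a triple $(M,f,g)$ with $(M,f)$ a canonical $m$-ary hypergroup with zero $0$ and $g:R^{n-1}\times M\to P^*(M)$ satisfying: $g(r_1^{n-1},f(x_1^m))=f(g(r_1^{n-1},x_1),\dots,g(r_1^{n-1},x_m))$; $g(r_1^{i-1},f'(s_1^m),r_{i+1}^{n-1},x)=f(g(r_1^{i-1},s_1,r_{i+1}^{n-1},x),\dots,g(r_1^{i-1},s_m,r_{i+1}^{n-1},x))$; $g(r_1^{i-1},g'(r_i^{i+n-1}),r_{i+n}^{2n-2},x)=g(r_1^{n-1},g(r_n^{2n-2},x))$; $g(r_1^{i-1},0,r_{i+1}^{n-1},x)=\{0\}$; moreover $g(1^{(n-1)},a)=\{a\}$. A subhypermodule is a nonempty $N\subseteq M$ with $(N,f)$ an $m$-ary subhypergroup and $g(R^{(n-1)},N)\subseteq N$; $\mathcal{SH}(M)$ is the set of subhypermodules of $M$. Given $\phi:\mathcal{SH}(M)\to\mathcal{SH}(M)\cup\{\varnothing\}$, a proper subhypermodule $Q$ of $M$ is $n$-ary $\phi$-classical prime if $g(r_1^{n-1},a)\subseteq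 Q\setminus\phi(Q)$ ($r_i\in R$, $a\in M$) implies $g(r_i,1^{(n-2)},a)\subseteq Q$ for some $1\le i\le n-1$. A homomorphism $h:M_1\to M_2$ satisfies $h(f_1(a_1^m))=f_2(h(a_1),\dots,h(a_m))$ and $h(g_1(r_1^{n-1},a))=g_2(r_1^{n-1},h(a))$; an epimorphism is a surjective homomorphism; $\mathrm{Ker}(h)=\{a\in M_1:h(a)=0\}$. *)

(* Defs.v *)
From mathcomp Require Import all_boot.
From Stdlib Require Import Permutation.
From Stdlib Require List.

Set Implicit Arguments.
Unset Strict Implicit.
Unset Printing Implicit Defensive.

(* An m-ary hyperoperation on T is a map  seq T -> T -> Prop :
   [f xs y] means  y \in f(xs); it is only meaningful (and all axioms are only
   required) on argument lists of size m.  Similarly an n-ary operation is a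
   map seq T -> T, and the scalar action of an (m,n)-hypermodule is
   g : seq R -> M -> M -> Prop, [g rs a y] meaning y \in g(r_1^{n-1}, a). *)

Definition set_eq {T : Type} (A B : T -> Prop) : Prop := forall x, A x <-> B x.
Definition sub_set {T : Type} (A B : T -> Prop) : Prop := forall x, A x -> B x.
Definition sing {T : Type} (x : T) : T -> Prop := fun y => y = x.

Definition hext {T : Type} (f : seq T -> T -> Prop) (As : seq (T -> Prop)) : T -> Prop :=
  fun y => exists xs, List.Forall2 (fun x (A : T -> Prop) => A x) xs As /\ f xs y.

Definition ins {T : Type} (i : nat) (x : T) (s : seq T) : seq T :=
  take i s ++ x :: drop i s.

Definition himage {A B : Type} (h : A -> B) (P : A -> Prop) : B -> Prop :=
  fun y => exists x, P x /\ h x = y.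
Definition hpreimage {A B : Type} (h : A -> B) (P : B -> Prop) : A -> Prop :=
  fun x => P (h x).

Record canonical_hypergroup (T : Type) (m : nat) (f : seq T -> T -> Prop) (z : T) : Prop := {
  ch_nonempty : forall xs, size xs = m -> exists y, f xs y;
  ch_assoc : forall xs, size xs = (2 * m - 1)%N -> forall i j, i < m -> j < m ->
    set_eq (hext f (map sing (take i xs) ++ f (take m (drop i xs)) :: map sing (drop (i + m) xs)))
           (hext f (map sing (take j xs) ++ f (take m (drop j xs)) :: map sing (drop (j + m) xs)));
  ch_repro : forall xs, size xs = m.-1 -> forall i, i < m -> forall x, exists w, f (ins i w xs) x;
  ch_comm : forall xs ys, size xs = m -> Permutation xs ys -> set_eq (f xs) (f ys);
  ch_zero : forall x, set_eq (f (x :: nseq m.-1 z)) (sing x);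
  ch_zero_unique : forall e, (forall x, set_eq (f (x :: nseq m.-1 e)) (sing x)) -> e = z;
  ch_inv : forall x, exists! y, f (x :: y :: nseq (m - 2) z) z;
  ch_rev : forall xs x i ys, size xs = m -> i < m -> f xs x ->
    List.Forall2 (fun a b => f (a :: b :: nseq (m - 2) z) z) (take i xs ++ drop i.+1 xs) ys ->
    f (x :: ys) (nth x xs i)
}.

Record krasner_hyperring (R : Type) (m n : nat) (fR : seq R -> R -> Prop) (gR : seq R -> R)
    (z one : R) : Prop := {
  kr_canonical : canonical_hypergroup m fR z;
  kr_assoc : forall xs, size xs = (2 * n - 1)%N -> forall i j, i < n -> j < n ->
    gR (take i xs ++ gR (take n (drop i xs)) :: drop (i + n) xs) =
    gR (take j xs ++ gR (take n (drop j xs)) :: drop (j + n) xs);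
  kr_comm : forall xs ys, size xs = n -> Permutation xs ys -> gR xs = gR ys;
  kr_distr : forall xs as_ i, size xs = n.-1 -> size as_ = m -> i < n ->
    set_eq (fun y => exists a, fR as_ a /\ y = gR (ins i a xs))
           (fR (map (fun a => gR (ins i a xs)) as_));
  kr_zero : forall xs i, size xs = n.-1 -> i < n -> gR (ins i z xs) = z;
  kr_one : forall x, gR (x :: nseq n.-1 one) = x
}.

Record hypermodule (R M : Type) (m n : nat) (fR : seq R -> R -> Prop) (gR : seq R -> R)
    (zR one : R) (f : seq M -> M -> Prop) (g : seq R -> M -> M -> Prop) (z : M) : Prop := {
  hm_canonical : canonical_hypergroup m f z;
  hm_nonempty : forall rs x, size rs = n.-1 -> exists y, g rs x y;
  hm_ax1 : forall rs xs, size rs = n.-1 -> size xs = m ->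
    set_eq (fun y => exists x, f xs x /\ g rs x y) (hext f (map (g rs) xs));
  hm_ax2 : forall rs ss i x, size rs = (n - 2)%N -> i <= n - 2 -> size ss = m ->
    set_eq (fun y => exists s, fR ss s /\ g (ins i s rs) x y)
           (hext f (map (fun s => g (ins i s rs) x) ss));
  hm_ax3 : forall rs i x, size rs = (2 * n - 2)%N -> i < n.-1 ->
    set_eq (g (take i rs ++ gR (take n (drop i rs)) :: drop (i + n) rs) x)
           (fun y => exists w, g (drop n.-1 rs) x w /\ g (take n.-1 rs) w y);
  hm_ax4 : forall rs i x, size rs = (n - 2)%N -> i <= n - 2 ->
    set_eq (g (ins i zR rs) x) (sing z);
  hm_one : forall a, set_eq (g (nseq n.-1 one) a) (sing a)
}.

Definition subhypergroup (M : Type) (m : nat) (f : seq M -> M -> Prop) (N : M -> Prop) : Prop :=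
  (exists x, N x) /\
  (forall xs y, size xs = m -> List.Forall N xs -> f xs y -> N y) /\
  (forall xs i x, size xs = m.-1 -> List.Forall N xs -> i < m -> N x ->
     exists w, N w /\ f (ins i w xs) x).

Definition subhypermodule (R M : Type) (m n : nat) (f : seq M -> M -> Prop)
    (g : seq R -> M -> M -> Prop) (N : M -> Prop) : Prop :=
  subhypergroup m f N /\
  (forall rs x y, size rs = n.-1 -> N x -> g rs x y -> N y).

Definition phi_function (R M : Type) (m n : nat) (f : seq M -> M -> Prop)
    (g : seq R -> M -> M -> Prop) (phi : (M -> Prop) -> (M -> Prop)) : Prop :=
  forall N, subhypermodule m n f g N ->
    subhypermodule m n f g (phi N) \/ (forall x, ~ phi N x).

Definition phi_classical_prime (R M : Type) (m n : nat) (one : R) (f : seq M -> M -> Prop)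
    (g : seq R -> M -> M -> Prop) (phi : (M -> Prop) -> (M -> Prop)) (Q : M -> Prop) : Prop :=
  subhypermodule m n f g Q /\ (exists a, ~ Q a) /\
  (forall rs a, size rs = n.-1 ->
     (forall x, g rs a x -> Q x /\ ~ phi Q x) ->
     exists i, i < n.-1 /\ (forall x, g (nth one rs i :: nseq (n - 2) one) a x -> Q x)).

Definition hyp_homomorphism (R M1 M2 : Type) (m n : nat)
    (f1 : seq M1 -> M1 -> Prop) (g1 : seq R -> M1 -> M1 -> Prop)
    (f2 : seq M2 -> M2 -> Prop) (g2 : seq R -> M2 -> M2 -> Prop) (h : M1 -> M2) : Prop :=
  (forall xs, size xs = m -> set_eq (himage h (f1 xs)) (f2 (map h xs))) /\
  (forall rs a, size rs = n.-1 -> set_eq (himage h (g1 rs a)) (g2 rs (h a))).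

Definition hyp_epimorphism (R M1 M2 : Type) (m n : nat)
    (f1 : seq M1 -> M1 -> Prop) (g1 : seq R -> M1 -> M1 -> Prop)
    (f2 : seq M2 -> M2 -> Prop) (g2 : seq R -> M2 -> M2 -> Prop) (h : M1 -> M2) : Prop :=
  hyp_homomorphism m n f1 g1 f2 g2 h /\ (forall y, exists x, h x = y).

Definition ker {M1 M2 : Type} (h : M1 -> M2) (z2 : M2) : M1 -> Prop := fun x => h x = z2.

(* Main.v *)
Require Import Defs.
From mathcomp Require Import all_boot zify.
From Stdlib Require Import Permutation.
From Stdlib Require List.
Module H1M.
Set Implicit Arguments.

Lemma size_ins T i (w : T) s : size (ins i w s) = (size s).+1.
Proof. by rewrite /ins size_cat /= addnS -size_cat cat_take_drop. Qed.

Lemma map_ins A B (h : A -> B) i w s : map h (ins i w s) = ins i (h w) (map h s).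
Proof. by rewrite /ins map_cat /= map_take map_drop. Qed.

Lemma ins_td T i (w : T) s : i <= size s -> take i (ins i w s) ++ drop i.+1 (ins i w s) = s.
Proof.
move=> Hi; rewrite /ins take_cat drop_cat size_take.
have -> : (if i < size s then i else size s) = i by case: ltnP => //; lia.
rewrite ltnn subnn take0 cats0 ltnNge leqnSn /= subSnn /= drop0.
by rewrite cat_take_drop.
Qed.

Lemma nth_ins T x0 i (w : T) s : i <= size s -> nth x0 (ins i w s) i = w.
Proof.
move=> Hi; rewrite /ins nth_cat size_take.
have -> : (if i < size s then i else size s) = i by case: ltnP => //; lia.
by rewrite ltnn subnn.
Qed.

Lemma F2size A B (P : A -> B -> Prop) l1 l2 : List.Forall2 P l1 l2 -> size l1 = size l2.
Proof. by elim=> //= ? ? ? ? _ _ ->. Qed.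

Lemma lift_list A B (h : A -> B) (Q : A -> Prop) ys :
  List.Forall (himage h Q) ys -> exists xs, ys = map h xs /\ List.Forall Q xs.
Proof.
elim=> [|y l [x [Qx <-]] _ [xs [-> Hxs]]]; first by exists [::].
by exists (x :: xs); split => //; constructor.
Qed.

Lemma map_forall A B (h : A -> B) (Q : B -> Prop) xs :
  List.Forall (hpreimage h Q) xs -> List.Forall Q (map h xs).
Proof. by elim=> //= *; constructor. Qed.

Lemma forall_map A B (h : A -> B) (Q : A -> Prop) xs :
  List.Forall Q xs -> List.Forall (himage h Q) (map h xs).
Proof. by elim=> //= x l Qx *; constructor => //; exists x. Qed.

Lemma F2nseq A (P : A -> A -> Prop) k a b : P a b -> List.Forall2 P (nseq k a) (nseq k b).
Proof. by move=> H; elim: k => //= k IH; constructor. Qed.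

Lemma Fnseq A (P : A -> Prop) k a : P a -> List.Forall P (nseq k a).
Proof. by move=> H; elim: k => //= k IH; constructor. Qed.

Lemma F2map_nseq A B (F : A -> B -> Prop) (zz : B) k (a : A) xs :
  (forall x, F a x -> x = zz) -> List.Forall2 (fun x (S : B -> Prop) => S x) xs (map F (nseq k a)) ->
  xs = nseq k zz.
Proof.
move=> H; elim: k xs => [|k IH] xs /= H2; inversion H2 as [|x S xs' Ss Hx Hr]; subst => //.
by rewrite (H _ Hx) (IH _ Hr).
Qed.
End H1M.
Import H1M.
Module H2M.
Set Implicit Arguments.

Lemma ins0 T (w : T) s : ins 0 w s = w :: s.
Proof. by rewrite /ins take0 drop0. Qed.

Lemma g_zero (R M : Type) m n fR gR (zR one : R) (f : seq M -> M -> Prop) g z x :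
  2 <= n -> hypermodule m n fR gR zR one f g z ->
  g (zR :: nseq (n - 2) one) x z.
Proof.
move=> Hn HM; have := hm_ax4 HM (rs := nseq (n-2) one) (i := 0) x.
rewrite size_nseq ins0 => H; by apply/(H erefl (leq0n _) z).
Qed.

Lemma zero_in (R M : Type) m n fR gR (zR one : R) (f : seq M -> M -> Prop) g z N :
  2 <= n -> hypermodule m n fR gR zR one f g z -> subhypermodule m n f g N -> N z.
Proof.
move=> Hn HM [[[x Nx] _] Hg].
apply: (Hg _ x) Nx (g_zero x Hn HM) => /=; rewrite size_nseq; lia.
Qed.

Lemma nseq_pred T m (a : T) : 2 <= m -> nseq m.-1 a = a :: nseq (m - 2) a.
Proof. by move=> Hm; have -> : m.-1 = (m - 2).+1 by lia. Qed.

Lemma neg_in (R M : Type) m n fR gR (zR one : R) (f : seq M -> M -> Prop) g z N b :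
  2 <= m -> 2 <= n -> krasner_hyperring m n fR gR zR one ->
  hypermodule m n fR gR zR one f g z -> subhypermodule m n f g N -> N b ->
  exists c, N c /\ f [:: b, c & nseq (m - 2) z] z.
Proof.
move=> Hm Hn HR HM HN Nb.
have [r [Hr _]] := ch_inv (kr_canonical HR) one.
have := hm_ax2 HM (rs := nseq (n-2) one) (ss := [:: one, r & nseq (m - 2) zR]) (i := 0) b.
rewrite size_nseq /= size_nseq => H.
have [|xs [H1 H2]] := proj1 (H erefl (leq0n _) ltac:(lia) z).
  exists zR; split; first exact: Hr. rewrite ins0; exact: (g_zero b Hn HM).
rewrite !ins0 in H1.
inversion H1 as [|x1 S1 xs1 Ss1 Hx1 Hr1]; subst.
inversion Hr1 as [|x2 S2 xs2 Ss2 Hx2 Hr2]; subst.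
have e1 : x1 = b.
  move: Hx1; rewrite -nseq_pred //; exact: (proj1 (hm_one HM b x1)).
have e2 : xs2 = nseq (m - 2) z.
  apply: F2map_nseq Hr2 => x; rewrite ins0 => Hx.
  have := hm_ax4 HM (rs := nseq (n-2) one) (i := 0) b; rewrite size_nseq ins0 => H4.
  exact: (proj1 (H4 erefl (leq0n _) x) Hx).
subst; exists x2; split => //.
case: HN => _ Hg; apply: Hg Nb Hx2; rewrite /= size_nseq; lia.
Qed.

Lemma neg_list (R M : Type) m n fR gR (zR one : R) (f : seq M -> M -> Prop) g z N l :
  2 <= m -> 2 <= n -> krasner_hyperring m n fR gR zR one ->
  hypermodule m n fR gR zR one f g z -> subhypermodule m n f g N -> List.Forall N l ->
  exists ys, List.Forall2 (fun a b => f (a :: b :: nseq (m - 2) z) z) l ys /\ List.Forall N ys.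
Proof.
move=> Hm Hn HR HM HN; elim=> [|b l0 Nb _ [ys [H1 H2]]]; first by exists [::].
have [c [Nc Hc]] := @neg_in _ _ _ _ _ _ _ _ _ _ _ _ _ Hm Hn HR HM HN Nb.
by exists (c :: ys); split; constructor.
Qed.
End H2M.
Import H2M.
Module H3M.
Set Implicit Arguments.

Lemma hz (R M1 M2 : Type) m n fR gR (zR one : R)
  (f1 : seq M1 -> M1 -> Prop) g1 z1 (f2 : seq M2 -> M2 -> Prop) g2 z2 (h : M1 -> M2) :
  2 <= n -> hypermodule m n fR gR zR one f1 g1 z1 -> hypermodule m n fR gR zR one f2 g2 z2 ->
  hyp_homomorphism m n f1 g1 f2 g2 h -> h z1 = z2.
Proof.
move=> Hn HM1 HM2 [_ Hg1].
have H1 := g_zero z1 Hn HM1.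
have Hs : size (zR :: nseq (n - 2) one) = n.-1 by rewrite /= size_nseq; lia.
have H2 := proj1 (Hg1 _ z1 Hs (h z1)) (ex_intro _ z1 (conj H1 erefl)).
have := hm_ax4 HM2 (rs := nseq (n-2) one) (i := 0) (h z1); rewrite size_nseq ins0 => H4.
exact: (proj1 (H4 erefl (leq0n _) _) H2).
Qed.

Lemma kerlem (R M1 M2 : Type) m n fR gR (zR one : R)
  (f1 : seq M1 -> M1 -> Prop) g1 z1 (f2 : seq M2 -> M2 -> Prop) g2 z2 (h : M1 -> M2) Q1 q a :
  2 <= m -> 2 <= n -> hypermodule m n fR gR zR one f1 g1 z1 -> hypermodule m n fR gR zR one f2 g2 z2 ->
  hyp_homomorphism m n f1 g1 f2 g2 h -> subhypermodule m n f1 g1 Q1 ->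
  sub_set (ker h z2) Q1 -> Q1 q -> h a = h q -> Q1 a.
Proof.
move=> Hm Hn HM1 HM2 Hh HQ Hker Qq Ha.
have Ez := hz Hn HM1 HM2 Hh.
have [y [Hy _]] := ch_inv (hm_canonical HM1) q.
have Hs : forall u v, size [:: u, v & nseq (m-2) z1] = m by move=> u v; rewrite /= size_nseq; lia.
have Hf := proj1 (proj1 Hh _ (Hs q y) (h z1)) (ex_intro _ z1 (conj Hy erefl)).
have Hf' : f2 (map h [:: a, y & nseq (m-2) z1]) z2.
  by move: Hf; rewrite /= map_nseq Ez Ha.
have [d [Hd hd]] := proj2 (proj1 Hh _ (Hs a y) z2) Hf'.
have Qd : Q1 d by apply: Hker.
have Z1 : Q1 z1 by apply: zero_in Hn HM1 HQ.
have Hfa : f1 (d :: q :: nseq (m-2) z1) a.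
  apply: (ch_rev (hm_canonical HM1) (xs := [:: a, y & nseq (m-2) z1]) (x := d) (i := 0)
   (ys := q :: nseq (m-2) z1) (Hs a y) ltac:(lia) Hd).
  rewrite /=; constructor.
    exact: (proj1 (ch_comm (hm_canonical HM1) (Hs q y) (perm_swap _ _ _) z1) Hy).
  apply: F2nseq.
  have := ch_zero (hm_canonical HM1) z1; rewrite nseq_pred // => H0.
  exact: (proj2 (H0 z1) erefl).
case: HQ => [[_ [Hcl _]] _].
apply: (Hcl _ _ _ _ Hfa); first by rewrite /= size_nseq; lia.
constructor => //; constructor => //; exact: Fnseq.
Qed.
End H3M.
Import H3M.

Theorem mainTheorem13 (R M1 M2 : Type) (m n : nat)
  (fR : seq R -> R -> Prop) (gR : seq R -> R) (zR one : R)
  (f1 : seq M1 -> M1 -> Prop) (g1 : seq R -> M1 -> M1 -> Prop) (z1 : M1)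
  (f2 : seq M2 -> M2 -> Prop) (g2 : seq R -> M2 -> M2 -> Prop) (z2 : M2)
  (h : M1 -> M2)
  (phi1 : (M1 -> Prop) -> (M1 -> Prop)) (phi2 : (M2 -> Prop) -> (M2 -> Prop)) :
  2 <= m -> 2 <= n ->
  krasner_hyperring m n fR gR zR one ->
  hypermodule m n fR gR zR one f1 g1 z1 ->
  hypermodule m n fR gR zR one f2 g2 z2 ->
  hyp_epimorphism m n f1 g1 f2 g2 h ->
  phi_function m n f1 g1 phi1 ->
  phi_function m n f2 g2 phi2 ->
  (forall Q2 : M2 -> Prop,
     phi_classical_prime m n one f2 g2 phi2 Q2 ->
     set_eq (phi1 (hpreimage h Q2)) (hpreimage h (phi2 Q2)) ->
     phi_classical_prime m n one f1 g1 phi1 (hpreimage h Q2)) /\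
  (forall Q1 : M1 -> Prop,
     phi_classical_prime m n one f1 g1 phi1 Q1 ->
     sub_set (ker h z2) Q1 ->
     set_eq (phi2 (himage h Q1)) (himage h (phi1 Q1)) ->
     phi_classical_prime m n one f2 g2 phi2 (himage h Q1)).
Proof.
move=> Hm Hn HR HM1 HM2 [Hh Hsurj] _ _.
have Hf1 := proj1 Hh; have Hg1 := proj2 Hh.
have Hs1 : forall r, size (r :: nseq (n - 2) one) = n.-1.
  by move=> r; rewrite /= size_nseq; lia.
split.
- move=> Q2 [HQ2 [[a2 Na2] Hpr]] Hphi.
  have [[[y0 Hy0] [Hcl Hrep]] Hg] := HQ2.
  split; [split; [split; [|split]|] | split].
  + have [x hx] := Hsurj y0; exists x; by rewrite /hpreimage hx.
  + move=> xs y Hsz HQ Hf; rewrite /hpreimage.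
    apply: (Hcl (map h xs)); [by rewrite size_map | exact: map_forall | ].
    exact: (proj1 (Hf1 xs Hsz (h y)) (ex_intro _ y (conj Hf erefl))).
  + move=> xs i x Hsz HQ Hi Qx.
    have [w Hw] := ch_repro (hm_canonical HM1) Hsz Hi x.
    exists w; split => //.
    have Hsz' : size (ins i w xs) = m by rewrite size_ins Hsz; lia.
    have H2 := proj1 (Hf1 _ Hsz' (h x)) (ex_intro _ x (conj Hw erefl)).
    rewrite map_ins in H2.
    have [ys [Hys Qys]] := @neg_list _ _ _ _ _ _ _ _ _ _ _ _ _ Hm Hn HR HM2 HQ2 (map_forall HQ).
    have Hle : i <= size (map h xs) by rewrite size_map Hsz; lia.
    have H3 : f2 (h x :: ys) (h w).
      rewrite -(@nth_ins _ (h x) i (h w) _ Hle).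
      apply: (ch_rev (hm_canonical HM2)) H2 _; first by rewrite size_ins size_map Hsz; lia.
        lia.
      by rewrite ins_td.
    apply: (Hcl _ _ _ _ H3); first by rewrite /= -(F2size Hys) size_map Hsz; lia.
    by constructor.
  + move=> rs x y Hrs Qx Hgy; rewrite /hpreimage; apply: (Hg _ (h x) _ Hrs Qx).
    exact: (proj1 (Hg1 rs x Hrs (h y)) (ex_intro _ y (conj Hgy erefl))).
  + have [a ha] := Hsurj a2; exists a; by rewrite /hpreimage ha.
  + move=> rs a Hrs Hall.
    have [|i [Hi Hi2]] := Hpr rs (h a) Hrs.
      move=> y Hy; have [x [Hx <-]] := proj2 (Hg1 rs a Hrs y) Hy.
      have [Qx Nphi] := Hall x Hx; split => // Hp; apply: Nphi.
      exact: (proj2 (Hphi x) Hp).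
    exists i; split => // x Hx; apply: Hi2.
    exact: (proj1 (Hg1 _ a (Hs1 _) (h x)) (ex_intro _ x (conj Hx erefl))).
- move=> Q1 [HQ1 [[a Na] Hpr]] Hker Hphi.
  have [[[y0 Hy0] [Hcl Hrep]] Hg] := HQ1.
  have KL := fun q a => @kerlem _ _ _ _ _ _ _ _ _ _ _ _ _ _ _ _ Q1 q a Hm Hn HM1 HM2 Hh HQ1 Hker.
  split; [split; [split; [|split]|] | split].
  + by exists (h y0), y0.
  + move=> ys y Hsz HQ Hf.
    have [xs [Exs HQx]] := lift_list HQ; subst ys.
    rewrite size_map in Hsz.
    have [x [Hx <-]] := proj2 (Hf1 xs Hsz y) Hf.
    exists x; split => //; exact: Hcl Hsz HQx Hx.
  + move=> ys i x Hsz HQ Hi [x1 [Qx1 <-]].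
    have [xs [Exs HQx]] := lift_list HQ; subst ys.
    rewrite size_map in Hsz.
    have [w [Qw Hw]] := Hrep xs i x1 Hsz HQx Hi Qx1.
    exists (h w); split; first by exists w.
    rewrite -map_ins.
    have Hsz' : size (ins i w xs) = m by rewrite size_ins Hsz; lia.
    exact: (proj1 (Hf1 _ Hsz' (h x1)) (ex_intro _ x1 (conj Hw erefl))).
  + move=> rs x y Hrs [x1 [Qx1 <-]] Hgy.
    have [x' [Hx' <-]] := proj2 (Hg1 rs x1 Hrs y) Hgy.
    exists x'; split => //; exact: Hg Hrs Qx1 Hx'.
  + exists (h a) => -[q [Qq hq]]; apply: Na; exact: (KL q a Qq (esym hq)).
  + move=> rs a2 Hrs Hall.
    have [a1 Ea] := Hsurj a2; subst a2.
    have [|i [Hi Hi2]] := Hpr rs a1 Hrs.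
      move=> x Hx.
      have Hy := proj1 (Hg1 rs a1 Hrs (h x)) (ex_intro _ x (conj Hx erefl)).
      have [[q [Qq hq]] Nphi] := Hall _ Hy.
      split; first exact: (KL q x Qq (esym hq)).
      move=> Hp; apply: Nphi; apply: (proj2 (Hphi (h x))); by exists x.
    exists i; split => // y Hy.
    have [x [Hx <-]] := proj2 (Hg1 _ a1 (Hs1 _) y) Hy.
    exists x; split => //; exact: Hi2.
Qed.
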